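(* Let $v\in\mathbb{M}\setminus\partial\mathbb{M}$ and $0<\epsilon<\infty$. Then there exists $w\in\partial\mathbb{M}$ with $d_{\mathrm{int}}(v,w)<\epsilon$ if and only if $\mathcal{T}_{2\epsilon}v\not\preceq Tv$.
   Context: Fix $\Lambda>0$ and an increasing homeomorphism $\varphi\colon[-\infty,\infty]\to[-\Lambda,\Lambda]$; for $s\in\mathbb{R}$ let $\rho_s\colon[-\Lambda,\Lambda]\to[-\Lambda,\Lambda]$, $\rho_s(t)=\varphi(s+\varphi^{-1}(t))$. Let $\mathbb{M}=\{(x,y)\in\mathbb{R}^2: -2\Lambda\le x+y\le2\Lambda\}$ with partial order $(x,y)\preceq(x',y')$ iff $x\ge x'$ and $y\le y'$, and boundary $\partial\mathbb{M}=\{|x+y|=2\Lambda\}$. Let $T\colon\mathbb{M}\to\mathbb{M}$, $T(x,y)=(-2\Lambda-y,2\Lambda-x)$. Put $S=(-\Lambda,\Lambda]\times[-\Lambda,\Lambda)$, $L=\{(x,y):x+y\ge-2\Lambda,\ x\le-\Lambda,\ y<\Lambda\}$, $A=\{(x,y):x+y\le2\Lambda,\ x>-\Lambda,\ y\ge\Lambda\}$; $\mathbb{M}$ is the disjoint union of the sets $T^k(S\sqcup L\sqcup A)$, $k\in\mathbb{Z}$. For $\epsilon\ge0$, $k\in\mathbb{Z}$, define $\mathcal{T}_\epsilon\colon\mathbb{M}\to\mathbb{M}$ by $\mathcal{T}_\epsilon(T^k(x,y))=T^k(\rho_{-\epsilon}(x),\rho_\epsilon(y))$ if $(x,y)\in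 S$; $=T^k(-2\Lambda-\rho_\epsilon(-2\Lambda-x),\rho_\epsilon(y))$ if $(x,y)\in L$; $=T^k(\rho_{-\epsilon}(x),2\Lambda-\rho_{-\epsilon}(2\Lambda-y))$ if $(x,y)\in A$. Let $d_{\mathrm{int}}(v,w)=\inf\{\epsilon>0: v\preceq\mathcal{T}_\epsilon w\text{ and }w\preceq\mathcal{T}_\epsilon v\}$ (infimum of empty set $=\infty$). *)

(* Defs.v *)
From Stdlib Require Import Reals Lra ZArith ClassicalEpsilon.
From Coquelicot Require Import Coquelicot.
Open Scope R_scope.

Definition pt := (R * R)%type.

Definition incr_homeo (Lam : R) (phi : Rbar -> R) (psi : R -> Rbar) : Prop :=
  (forall a b : Rbar, Rbar_lt a b -> phi a < phi b) /\
  phi m_infty = - Lam /\ phi p_infty = Lam /\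
  (forall a : Rbar, - Lam <= phi a <= Lam) /\
  (forall a : Rbar, psi (phi a) = a) /\
  (forall t : R, - Lam <= t <= Lam -> phi (psi t) = t).

Definition rho (phi : Rbar -> R) (psi : R -> Rbar) (s t : R) : R :=
  phi (Rbar_plus (Finite s) (psi t)).

Definition inM (Lam : R) (p : pt) : Prop :=
  -2 * Lam <= fst p + snd p <= 2 * Lam.
Definition inbdM (Lam : R) (p : pt) : Prop :=
  Rabs (fst p + snd p) = 2 * Lam.
Definition preceq (p q : pt) : Prop :=
  fst p >= fst q /\ snd p <= snd q.

Definition Tmap (Lam : R) (p : pt) : pt :=
  (-2 * Lam - snd p, 2 * Lam - fst p).
Definition Tinv (Lam : R) (p : pt) : pt :=
  (2 * Lam - snd p, -2 * Lam - fst p).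
Definition Tpow (Lam : R) (k : Z) (p : pt) : pt :=
  match k with
  | Z0 => p
  | Zpos n => Pos.iter (Tmap Lam) p n
  | Zneg n => Pos.iter (Tinv Lam) p n
  end.

Definition inS (Lam : R) (p : pt) : Prop :=
  - Lam < fst p <= Lam /\ - Lam <= snd p < Lam.
Definition inL (Lam : R) (p : pt) : Prop :=
  fst p + snd p >= -2 * Lam /\ fst p <= - Lam /\ snd p < Lam.
Definition inA (Lam : R) (p : pt) : Prop :=
  fst p + snd p <= 2 * Lam /\ fst p > - Lam /\ snd p >= Lam.

(* Graph of the map calT_eps: calT_eps (T^k u) = T^k (...) for u in S, L, A. *)
Definition calT_rel (Lam : R) (phi : Rbar -> R) (psi : R -> Rbar) (eps : R)
    (v w : pt) : Prop :=
  exists (k : Z) (x y : R), v = Tpow Lam k (x, y) /\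
    ((inS Lam (x, y) /\
        w = Tpow Lam k (rho phi psi (- eps) x, rho phi psi eps y)) \/
     (inL Lam (x, y) /\
        w = Tpow Lam k (-2 * Lam - rho phi psi eps (-2 * Lam - x),
                        rho phi psi eps y)) \/
     (inA Lam (x, y) /\
        w = Tpow Lam k (rho phi psi (- eps) x,
                        2 * Lam - rho phi psi (- eps) (2 * Lam - y)))).

(* calT_eps as a function: the (unique, since M is the disjoint union of the
   T^k(S ⊔ L ⊔ A)) w related to v. *)
Definition calT (Lam : R) (phi : Rbar -> R) (psi : R -> Rbar) (eps : R)
    (v : pt) : pt :=
  epsilon (inhabits ((0, 0) : pt)) (fun w => calT_rel Lam phi psi eps v w).

(* d_int(v,w) = inf {eps > 0 | v ⪯ calT_eps w and w ⪯ calT_eps v}, in [0,+oo]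
   (inf of the empty set is +oo). *)
Definition d_int (Lam : R) (phi : Rbar -> R) (psi : R -> Rbar) (v w : pt)
    : Rbar :=
  Glb_Rbar (fun eps => 0 < eps /\
                       preceq v (calT Lam phi psi eps w) /\
                       preceq w (calT Lam phi psi eps v)).

(* Main.v *)
Require Import Defs.
From Stdlib Require Import Reals Lra Lia ZArith ClassicalEpsilon Classical.
From Coquelicot Require Import Coquelicot.
Open Scope R_scope.

Lemma Tmap_Tinv L p : Tmap L (Tinv L p) = p.
Proof. destruct p as [x y]; unfold Tmap, Tinv; simpl; f_equal; lra. Qed.
Lemma Tinv_Tmap L p : Tinv L (Tmap L p) = p.
Proof. destruct p as [x y]; unfold Tmap, Tinv; simpl; f_equal; lra. Qed.

Lemma Tpow_succ L k p : Tpow L (Z.succ k) p = Tmap L (Tpow L k p).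
Proof.
  destruct k as [|n|n].
  - reflexivity.
  - simpl. rewrite Pos.add_1_r, Pos.iter_succ. reflexivity.
  - destruct (Pos.succ_pred_or n) as [->|E].
    + simpl. rewrite Tmap_Tinv. reflexivity.
    + rewrite <- E. set (m := Pos.pred n).
      replace (Z.succ (Z.neg (Pos.succ m))) with (Z.neg m) by lia.
      simpl. rewrite Pos.iter_succ, Tmap_Tinv. reflexivity.
Qed.

Lemma Tpow_pred L k p : Tpow L (Z.pred k) p = Tinv L (Tpow L k p).
Proof.
  destruct k as [|n|n].
  - reflexivity.
  - destruct (Pos.succ_pred_or n) as [->|E].
    + simpl. rewrite Tinv_Tmap. reflexivity.
    + rewrite <- E. set (m := Pos.pred n).
      replace (Z.pred (Z.pos (Pos.succ m))) with (Z.pos m) by lia.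
      simpl. rewrite Pos.iter_succ, Tinv_Tmap. reflexivity.
  - simpl. rewrite Pos.add_1_r, Pos.iter_succ. reflexivity.
Qed.

Lemma Tpow_add L j k p : Tpow L (j + k) p = Tpow L j (Tpow L k p).
Proof.
  induction j using Z.peano_ind.
  - reflexivity.
  - replace (Z.succ j + k)%Z with (Z.succ (j + k)) by lia.
    rewrite !Tpow_succ, IHj. reflexivity.
  - replace (Z.pred j + k)%Z with (Z.pred (j + k)) by lia.
    rewrite !Tpow_pred, IHj. reflexivity.
Qed.

Lemma Tpow_Tmap L k p : Tpow L k (Tmap L p) = Tmap L (Tpow L k p).
Proof.
  change (Tmap L p) with (Tpow L 1 p). rewrite <- Tpow_add.
  replace (k + 1)%Z with (1 + k)%Z by lia. rewrite Tpow_add. reflexivity.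
Qed.

Lemma Tpow_inv L k p : Tpow L k (Tpow L (- k) p) = p.
Proof. rewrite <- Tpow_add. replace (k + - k)%Z with 0%Z by lia. reflexivity. Qed.
Lemma Tpow_inv' L k p : Tpow L (- k) (Tpow L k p) = p.
Proof. rewrite <- Tpow_add. replace (- k + k)%Z with 0%Z by lia. reflexivity. Qed.

Definition gf (L : R) (p : pt) : R := Rmin (L - fst p) (snd p + L).

Lemma g_Tmap L p : gf L (Tmap L p) = gf L p + 2 * L.
Proof. destruct p as [x y]; unfold gf, Tmap, Rmin; simpl;
  repeat destruct Rle_dec; lra. Qed.
Lemma g_Tinv L p : gf L (Tinv L p) = gf L p - 2 * L.
Proof. destruct p as [x y]; unfold gf, Tinv, Rmin; simpl;
  repeat destruct Rle_dec; lra. Qed.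

Lemma g_Tpow L k p : gf L (Tpow L k p) = gf L p + 2 * L * IZR k.
Proof.
  induction k using Z.peano_ind.
  - simpl. lra.
  - rewrite Tpow_succ, g_Tmap, IHk, succ_IZR. lra.
  - rewrite Tpow_pred, g_Tinv, IHk, <- Z.sub_1_r, minus_IZR. simpl. lra.
Qed.

Lemma g_mono L p q : preceq p q -> gf L p <= gf L q.
Proof. destruct p, q; unfold preceq, gf, Rmin; simpl; intros [];
  repeat destruct Rle_dec; lra. Qed.

Lemma sum_Tpow L k p : fst (Tpow L k p) + snd (Tpow L k p) = fst p + snd p \/
                       fst (Tpow L k p) + snd (Tpow L k p) = - (fst p + snd p).
Proof.
  induction k using Z.peano_ind.
  - left; reflexivity.
  - rewrite Tpow_succ. destruct (Tpow L k p) as [a b]; unfold Tmap; simpl in *. lra.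
  - rewrite Tpow_pred. destruct (Tpow L k p) as [a b]; unfold Tinv; simpl in *. lra.
Qed.

Lemma inM_Tpow L k p : inM L (Tpow L k p) <-> inM L p.
Proof. unfold inM; destruct (sum_Tpow L k p) as [E|E]; rewrite E; lra. Qed.

Lemma inbdM_Tpow L k p : inbdM L (Tpow L k p) <-> inbdM L p.
Proof. unfold inbdM; destruct (sum_Tpow L k p) as [E|E]; rewrite E;
  [tauto| rewrite Rabs_Ropp; tauto]. Qed.

Lemma preceq_Tpow L k p q : preceq (Tpow L k p) (Tpow L k q) <-> preceq p q.
Proof.
  induction k using Z.peano_ind.
  - reflexivity.
  - rewrite !Tpow_succ. rewrite <- IHk.
    destruct (Tpow L k p), (Tpow L k q); unfold preceq, Tmap; simpl; split; intros []; lra.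
  - rewrite !Tpow_pred. rewrite <- IHk.
    destruct (Tpow L k p), (Tpow L k q); unfold preceq, Tinv; simpl; split; intros []; lra.
Qed.

Definition inD L p := inS L p \/ inL L p \/ inA L p.

Lemma inD_g L p : 0 < L -> inD L p -> 0 <= gf L p < 2 * L.
Proof. destruct p as [x y]; unfold inD, inS, inL, inA, gf, Rmin; simpl;
  intros HL; repeat destruct Rle_dec; lra. Qed.

Lemma g_inD L p : inM L p -> 0 <= gf L p < 2 * L -> inD L p.
Proof.
  destruct p as [x y]; unfold inM, inD, inS, inL, inA, gf, Rmin; simpl.
  intros HM Hg. destruct (Rle_dec (L - x) (y + L));
  destruct (Rle_dec x (-L)); destruct (Rlt_dec y L); lra.
Qed.

Lemma Zle_of L k j : 0 < L -> 2 * L * IZR k < 2 * L * IZR j + 2 * L -> (k <= j)%Z.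
Proof.
  intros HL Hk.
  assert (IZR k < IZR (j + 1)).
  { rewrite plus_IZR. apply Rmult_lt_reg_l with (2 * L); simpl; lra. }
  apply lt_IZR in H. lia.
Qed.

Lemma decompose_M L v : 0 < L -> inM L v -> exists k p, inD L p /\ v = Tpow L k p.
Proof.
  intros HL HM.
  set (r := gf L v / (2 * L)).
  destruct (archimed r) as [H1 H2].
  exists (up r - 1)%Z, (Tpow L (- (up r - 1)) v). split.
  - apply g_inD. apply inM_Tpow; auto.
    rewrite g_Tpow, opp_IZR, minus_IZR. simpl.
    assert (gf L v = r * (2 * L)) by (unfold r; field; lra).
    rewrite H. split; nra.
  - rewrite Tpow_inv. reflexivity.
Qed.

Lemma Tpow_unique L k j p q : 0 < L -> inD L p -> inD L q ->
  Tpow L k p = Tpow L j q -> k = j /\ p = q.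
Proof.
  intros HL Hp Hq E.
  assert (Hg := f_equal (gf L) E). rewrite !g_Tpow in Hg.
  apply inD_g in Hp; auto. apply inD_g in Hq; auto.
  assert (k = j).
  { assert (k <= j)%Z by (apply (Zle_of L); lra).
    assert (j <= k)%Z by (apply (Zle_of L); lra). lia. }
  subst j. split; auto.
  rewrite <- (Tpow_inv' L k p), E, Tpow_inv'. reflexivity.
Qed.

Definition Fm L phi psi s (p : pt) : pt :=
  let (x, y) := p in
  if Rle_dec x (- L) then (-2 * L - rho phi psi s (-2 * L - x), rho phi psi s y)
  else if Rlt_dec y L then (rho phi psi (- s) x, rho phi psi s y)
  else (rho phi psi (- s) x, 2 * L - rho phi psi (- s) (2 * L - y)).

Lemma Fm_S L phi psi s x y : inS L (x, y) ->
  Fm L phi psi s (x, y) = (rho phi psi (- s) x, rho phi psi s y).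
Proof. unfold inS, Fm; simpl; intros.
  destruct Rle_dec; [lra|]. destruct Rlt_dec; [reflexivity|lra]. Qed.
Lemma Fm_L L phi psi s x y : inL L (x, y) ->
  Fm L phi psi s (x, y) = (-2 * L - rho phi psi s (-2 * L - x), rho phi psi s y).
Proof. unfold inL, Fm; simpl; intros.
  destruct Rle_dec; [reflexivity|lra]. Qed.
Lemma Fm_A L phi psi s x y : inA L (x, y) ->
  Fm L phi psi s (x, y) = (rho phi psi (- s) x, 2 * L - rho phi psi (- s) (2 * L - y)).
Proof. unfold inA, Fm; simpl; intros.
  destruct Rle_dec; [lra|]. destruct Rlt_dec; [lra|reflexivity]. Qed.

Lemma calT_rel_F L phi psi s k x y : inD L (x, y) ->
  calT_rel L phi psi s (Tpow L k (x, y)) (Tpow L k (Fm L phi psi s (x, y))).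
Proof.
  intros HD. exists k, x, y. split; [reflexivity|].
  destruct HD as [h|[h|h]].
  - left. split; auto. rewrite Fm_S; auto.
  - right; left. split; auto. rewrite Fm_L; auto.
  - right; right. split; auto. rewrite Fm_A; auto.
Qed.

Lemma calT_rel_unique L phi psi s v w1 w2 : 0 < L ->
  calT_rel L phi psi s v w1 -> calT_rel L phi psi s v w2 -> w1 = w2.
Proof.
  intros HL [k1 [x1 [y1 [E1 H1]]]] [k2 [x2 [y2 [E2 H2]]]].
  assert (D1 : inD L (x1, y1)) by (unfold inD; destruct H1 as [[]|[[]|[]]]; tauto).
  assert (D2 : inD L (x2, y2)) by (unfold inD; destruct H2 as [[]|[[]|[]]]; tauto).
  rewrite E1 in E2. destruct (Tpow_unique L k1 k2 _ _ HL D1 D2 E2) as [-> Ep].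
  injection Ep as -> ->.
  destruct H1 as [[a1 ->]|[[a1 ->]|[a1 ->]]];
  destruct H2 as [[a2 ->]|[[a2 ->]|[a2 ->]]]; try reflexivity;
  unfold inS, inL, inA in *; simpl in *; lra.
Qed.

Lemma calT_val L phi psi s k x y : 0 < L -> inD L (x, y) ->
  calT L phi psi s (Tpow L k (x, y)) = Tpow L k (Fm L phi psi s (x, y)).
Proof.
  intros HL HD. assert (Hr := calT_rel_F L phi psi s k x y HD).
  unfold calT. eapply calT_rel_unique; [exact HL| |exact Hr].
  apply epsilon_spec. eexists; exact Hr.
Qed.

Section Rho.
Context (L : R) (phi : Rbar -> R) (psi : R -> Rbar) (HL : 0 < L) (H : incr_homeo L phi psi).

Definition P a := phi (Finite a).

Lemma Plt a b : a < b -> P a < P b.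
Proof. destruct H as [h _]. intros; apply h; simpl; auto. Qed.
Lemma Ple a b : a <= b -> P a <= P b.
Proof. intros h; destruct h as [h|h]; [left; apply Plt; auto| subst; right; reflexivity]. Qed.
Lemma Plt_inv a b : P a < P b -> a < b.
Proof. intros h. destruct (Rlt_or_le a b) as [|h2]; auto. apply Ple in h2. lra. Qed.
Lemma Ple_inv a b : P a <= P b -> a <= b.
Proof. intros h. destruct (Rlt_or_le b a) as [h2|]; auto. apply Plt in h2. lra. Qed.
Lemma Pbnd a : - L < P a < L.
Proof. destruct H as [h [h1 [h2 _]]]. unfold P. split.
  - rewrite <- h1. apply h. simpl; auto.
  - rewrite <- h2. apply h. simpl; auto. Qed.

Lemma decomp t : - L <= t <= L -> t = - L \/ t = L \/ exists a, t = P a.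
Proof.
  destruct H as [_ [h1 [h2 [_ [_ h5]]]]]. intros Ht.
  rewrite <- (h5 t Ht). destruct (psi t) as [a| |].
  - right; right; exists a; reflexivity.
  - right; left; auto.
  - left; auto.
Qed.

Lemma rhoP s a : rho phi psi s (P a) = P (s + a).
Proof. destruct H as [_ [_ [_ [_ [h4 _]]]]]. unfold rho, P. rewrite h4. reflexivity. Qed.
Lemma rhoL s : rho phi psi s L = L.
Proof. destruct H as [_ [_ [h2 [_ [h4 _]]]]]. unfold rho.
  assert (psi L = p_infty) by (rewrite <- h2 at 1; apply h4).
  rewrite H0. exact h2. Qed.
Lemma rhomL s : rho phi psi s (- L) = - L.
Proof. destruct H as [_ [h1 [_ [_ [h4 _]]]]]. unfold rho.
  assert (psi (- L) = m_infty) by (rewrite <- h1 at 1; apply h4).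
  rewrite H0. exact h1. Qed.

Lemma rho_mono s t1 t2 : - L <= t1 <= L -> - L <= t2 <= L -> t1 <= t2 ->
  rho phi psi s t1 <= rho phi psi s t2.
Proof.
  intros h1 h2 h.
  destruct (decomp t1 h1) as [->|[->|[a ->]]];
  destruct (decomp t2 h2) as [->|[->|[b ->]]];
  rewrite ?rhoP, ?rhoL, ?rhomL; try lra;
  try (pose proof (Pbnd a); lra); try (pose proof (Pbnd b); lra);
  try (pose proof (Pbnd (s + a)); lra); try (pose proof (Pbnd (s + b)); lra).
  apply Ple. apply Ple_inv in h. lra.
Qed.

Lemma rho_lt_L s t : - L <= t < L -> rho phi psi s t < L.
Proof. intros h. destruct (decomp t ltac:(lra)) as [->|[->|[a ->]]];
  rewrite ?rhoP, ?rhomL; try lra. apply Pbnd. Qed.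
Lemma rho_gt_mL s t : - L < t <= L -> - L < rho phi psi s t.
Proof. intros h. destruct (decomp t ltac:(lra)) as [->|[->|[a ->]]];
  rewrite ?rhoP, ?rhoL; try lra. apply Pbnd. Qed.
Lemma rho_rng s t : - L <= rho phi psi s t <= L.
Proof. destruct H as [_ [_ [_ [h3 _]]]]. apply h3. Qed.

Lemma Fm_D s p : inD L p -> inD L (Fm L phi psi s p).
Proof.
  destruct p as [x y]. intros [h|[h|h]]; unfold inD.
  - rewrite Fm_S; auto. left. unfold inS in *; simpl in *.
    pose proof (rho_gt_mL (-s) x ltac:(lra)). pose proof (rho_lt_L s y ltac:(lra)).
    pose proof (rho_rng (-s) x). pose proof (rho_rng s y). lra.
  - rewrite Fm_L; auto. right; left. unfold inL in *; simpl in *.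
    pose proof (rho_lt_L s y ltac:(lra)).
    pose proof (rho_rng s (-2 * L - x)).
    pose proof (rho_mono s (-2*L - x) y ltac:(lra) ltac:(lra) ltac:(lra)). lra.
  - rewrite Fm_A; auto. right; right. unfold inA in *; simpl in *.
    pose proof (rho_gt_mL (-s) x ltac:(lra)).
    pose proof (rho_rng (-s) (2 * L - y)).
    pose proof (rho_mono (-s) x (2*L - y) ltac:(lra) ltac:(lra) ltac:(lra)). lra.
Qed.

End Rho.

Section Local.
Context (L : R) (phi : Rbar -> R) (psi : R -> Rbar) (HL : 0 < L) (H : incr_homeo L phi psi).

Lemma bd_cases c d : inbdM L (c, d) -> c + d = 2 * L \/ c + d = -2 * L.
Proof. unfold inbdM; simpl. destruct (Rcase_abs (c + d)) as [h|h];
  [rewrite Rabs_left|rewrite Rabs_right]; lra. Qed.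
Lemma nbd_cases x y : ~ inbdM L (x, y) -> x + y <> 2 * L /\ x + y <> -2 * L.
Proof. intros Hb; split; intro E; apply Hb; unfold inbdM; simpl; rewrite E;
  [rewrite Rabs_right|rewrite Rabs_left]; lra. Qed.

Lemma local_fwd x y c d s e :
  inD L (x, y) -> ~ inbdM L (x, y) -> inD L (c, d) -> inbdM L (c, d) -> 0 < s < e ->
  preceq (x, y) (Fm L phi psi s (c, d)) -> preceq (c, d) (Fm L phi psi s (x, y)) ->
  ~ preceq (Fm L phi psi (2 * e) (x, y)) (Tmap L (x, y)).
Proof.
  intros Hp Hpb Hq Hqb Hs H1 H2 H3.
  apply bd_cases in Hqb. apply nbd_cases in Hpb.
  destruct Hp as [hp|[hp|hp]].
  - rewrite Fm_S in H2 by auto. unfold inS in hp; simpl in hp. unfold preceq in H2; simpl in H2.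
    pose proof (rho_gt_mL L phi psi H (-s) x ltac:(lra)).
    pose proof (rho_lt_L L phi psi H s y ltac:(lra)).
    destruct Hq as [hq|[hq|hq]]; unfold inS, inL, inA in hq; simpl in hq; lra.
  - rewrite Fm_L in H2 by auto. unfold inL in hp; simpl in hp. unfold preceq in H2; simpl in H2.
    pose proof (rho_lt_L L phi psi H s y ltac:(lra)).
    destruct Hq as [hq|[hq|hq]]; unfold inS, inA in hq; simpl in hq; try lra.
    rewrite Fm_L in H1 by auto. rewrite Fm_L in H3 by auto. unfold inL in hq; simpl in hq.
    unfold preceq, Tmap in H1, H3; simpl in H1, H3.
    replace (-2 * L - c) with d in H1 by lra.
    assert (Ht : - L <= -2 * L - x < L) by lra.
    assert (d <= rho phi psi s (-2 * L - x)) by lra.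
    pose proof (rho_rng L phi psi H s (-2 * L - x)).
    pose proof (rho_mono L phi psi H s d (rho phi psi s (-2 * L - x)) ltac:(lra) ltac:(lra) ltac:(lra)).
    destruct (decomp L phi psi H (-2 * L - x) ltac:(lra)) as [E|[E|[a E]]];
      rewrite E in *.
    + rewrite !(rhomL L phi psi H) in *. lra.
    + lra.
    + rewrite !(rhoP L phi psi H) in *.
      assert (P phi (2 * e + a) <= P phi (s + (s + a))) by lra.
      apply (Ple_inv L phi psi H) in H7. lra.
  - rewrite Fm_A in H2 by auto. unfold inA in hp; simpl in hp. unfold preceq in H2; simpl in H2.
    pose proof (rho_gt_mL L phi psi H (-s) x ltac:(lra)).
    destruct Hq as [hq|[hq|hq]]; unfold inS, inL in hq; simpl in hq; try lra.
    rewrite Fm_A in H1 by auto. rewrite Fm_A in H3 by auto. unfold inA in hq; simpl in hq.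
    unfold preceq, Tmap in H1, H3; simpl in H1, H3.
    replace (2 * L - d) with c in H1 by lra.
    assert (Ht : - L < 2 * L - y <= L) by lra.
    assert (rho phi psi (-s) (2 * L - y) <= c) by lra.
    pose proof (rho_rng L phi psi H (-s) (2 * L - y)).
    pose proof (rho_mono L phi psi H (-s) (rho phi psi (-s) (2 * L - y)) c ltac:(lra) ltac:(lra) ltac:(lra)).
    destruct (decomp L phi psi H (2 * L - y) ltac:(lra)) as [E|[E|[a E]]];
      rewrite E in *.
    + lra.
    + rewrite !(rhoL L phi psi H) in *. lra.
    + rewrite !(rhoP L phi psi H) in *.
      assert (P phi (- s + (- s + a)) <= P phi (- (2 * e) + a)) by lra.
      apply (Ple_inv L phi psi H) in H7. lra.
Qed.

End Local.

Section Local2.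
Context (L : R) (phi : Rbar -> R) (psi : R -> Rbar) (HL : 0 < L) (H : incr_homeo L phi psi).

Lemma local_bwd x y e :
  inD L (x, y) -> ~ inbdM L (x, y) -> 0 < e ->
  ~ preceq (Fm L phi psi (2 * e) (x, y)) (Tmap L (x, y)) ->
  exists s c d, 0 < s < e /\ inD L (c, d) /\ inbdM L (c, d) /\
    preceq (x, y) (Fm L phi psi s (c, d)) /\ preceq (c, d) (Fm L phi psi s (x, y)).
Proof.
  intros Hp Hpb He Hn. apply (nbd_cases L HL) in Hpb.
  destruct Hp as [hp|[hp|hp]].
  - exfalso. apply Hn. rewrite Fm_S by auto. unfold inS in hp; simpl in hp.
    unfold preceq, Tmap; simpl.
    pose proof (rho_rng L phi psi H (-(2*e)) x). pose proof (rho_rng L phi psi H (2*e) y). lra.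
  - rewrite Fm_L in Hn by auto. unfold inL in hp; simpl in hp.
    unfold preceq, Tmap in Hn; simpl in Hn.
    pose proof (rho_rng L phi psi H (2*e) y).
    assert (Hn2 : rho phi psi (2 * e) (-2 * L - x) > y).
    { apply Rnot_le_lt. intro h. apply Hn. split; lra. }
    destruct (decomp L phi psi H y ltac:(lra)) as [Ey|[Ey|[b Ey]]]; [lra|lra|].
    destruct (decomp L phi psi H (-2 * L - x) ltac:(lra)) as [Ex|[Ex|[a Ex]]].
    + rewrite Ex, (rhomL L phi psi H) in Hn2. lra.
    + lra.
    + rewrite Ex, (rhoP L phi psi H) in Hn2. rewrite Ey in Hn2.
      apply (Plt_inv L phi psi H) in Hn2.
      assert (Hab : P phi a < P phi b) by lra.
      apply (Plt_inv L phi psi H) in Hab.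
      set (s := (2 * e + b - a) / 4).
      pose proof (Pbnd L phi psi H (s + a)).
      exists s, (-2 * L - P phi (s + a)), (P phi (s + a)).
      split; [unfold s; lra|].
      assert (hq : inL L (-2 * L - P phi (s + a), P phi (s + a))) by (unfold inL; simpl; lra).
      split; [right; left; exact hq|].
      split; [unfold inbdM; simpl; replace (-2 * L - P phi (s + a) + P phi (s + a)) with (-(2*L)) by ring;
              rewrite Rabs_Ropp, Rabs_right; lra|].
      rewrite (Fm_L L phi psi) by exact hq. rewrite (Fm_L L phi psi) by (unfold inL; simpl; lra).
      replace (-2 * L - (-2 * L - P phi (s + a))) with (P phi (s + a)) by ring.
      rewrite Ex, Ey, !(rhoP L phi psi H).
      unfold preceq; simpl.
      assert (P phi a <= P phi (s + (s + a))) by (apply (Ple L phi psi H); unfold s; lra).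
      assert (P phi b <= P phi (s + (s + a))) by (apply (Ple L phi psi H); unfold s; lra).
      assert (P phi (s + a) <= P phi (s + b)) by (apply (Ple L phi psi H); lra).
      lra.
  - rewrite Fm_A in Hn by auto. unfold inA in hp; simpl in hp.
    unfold preceq, Tmap in Hn; simpl in Hn.
    pose proof (rho_rng L phi psi H (-(2*e)) x).
    assert (Hn2 : rho phi psi (- (2 * e)) (2 * L - y) < x).
    { apply Rnot_le_lt. intro h. apply Hn. split; lra. }
    destruct (decomp L phi psi H x ltac:(lra)) as [Ex|[Ex|[a Ex]]]; [lra|lra|].
    destruct (decomp L phi psi H (2 * L - y) ltac:(lra)) as [Ey|[Ey|[b Ey]]].
    + lra.
    + rewrite Ey, (rhoL L phi psi H) in Hn2. lra.
    + rewrite Ey, (rhoP L phi psi H) in Hn2. rewrite Ex in Hn2.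
      apply (Plt_inv L phi psi H) in Hn2.
      assert (Hab : P phi a < P phi b) by lra.
      apply (Plt_inv L phi psi H) in Hab.
      set (s := (2 * e + b - a) / 4).
      pose proof (Pbnd L phi psi H (- s + b)).
      exists s, (P phi (- s + b)), (2 * L - P phi (- s + b)).
      split; [unfold s; lra|].
      assert (hq : inA L (P phi (- s + b), 2 * L - P phi (- s + b))) by (unfold inA; simpl; lra).
      split; [right; right; exact hq|].
      split; [unfold inbdM; simpl; replace (P phi (- s + b) + (2 * L - P phi (- s + b))) with (2*L) by ring;
              rewrite Rabs_right; lra|].
      rewrite (Fm_A L phi psi) by exact hq. rewrite (Fm_A L phi psi) by (unfold inA; simpl; lra).
      replace (2 * L - (2 * L - P phi (- s + b))) with (P phi (- s + b)) by ring.
      rewrite Ex, Ey, !(rhoP L phi psi H).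
      unfold preceq; simpl.
      assert (P phi (- s + (- s + b)) <= P phi a) by (apply (Ple L phi psi H); unfold s; lra).
      assert (P phi (- s + (- s + b)) <= P phi b) by (apply (Ple L phi psi H); unfold s; lra).
      assert (P phi (- s + a) <= P phi (- s + b)) by (apply (Ple L phi psi H); lra).
      lra.
Qed.

End Local2.

Lemma glb_lt (E : R -> Prop) e : Rbar_lt (Glb_Rbar E) (Finite e) -> exists x, E x /\ x < e.
Proof.
  intros h. apply NNPP. intro hn.
  destruct (Glb_Rbar_correct E) as [_ h2].
  assert (Rbar_le (Finite e) (Glb_Rbar E)).
  { apply h2. intros x hx. simpl. apply Rnot_lt_le. intro hlt. apply hn. exists x; auto. }
  exact (Rbar_lt_not_le _ _ h H).
Qed.

Lemma glb_le (E : R -> Prop) x : E x -> Rbar_le (Glb_Rbar E) (Finite x).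
Proof. intros h. destruct (Glb_Rbar_correct E) as [h1 _]. apply h1; auto. Qed.

Theorem proposition7p5 (Lam : R) (phi : Rbar -> R) (psi : R -> Rbar)
  (v : pt) (eps : R) :
  0 < Lam ->
  incr_homeo Lam phi psi ->
  inM Lam v -> ~ inbdM Lam v ->
  0 < eps ->
  ((exists w : pt, inM Lam w /\ inbdM Lam w /\
       Rbar_lt (d_int Lam phi psi v w) (Finite eps)) <->
   ~ preceq (calT Lam phi psi (2 * eps) v) (Tmap Lam v)).
Proof.
  intros HL H HvM Hvb He.
  destruct (decompose_M Lam v HL HvM) as [k [[x y] [Hp ->]]].
  assert (Hpb : ~ inbdM Lam (x, y)) by (intro h; apply Hvb; apply inbdM_Tpow; auto).
  rewrite (calT_val Lam phi psi (2 * eps) k x y HL Hp).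
  rewrite <- Tpow_Tmap, preceq_Tpow.
  split.
  - intros [w [HwM [Hwb Hd]]].
    destruct (glb_lt _ _ Hd) as [s [[Hs [H1 H2]] Hse]].
    destruct (decompose_M Lam w HL HwM) as [j [[c d] [Hq ->]]].
    rewrite (calT_val Lam phi psi s j c d HL Hq) in H1.
    rewrite (calT_val Lam phi psi s k x y HL Hp) in H2.
    assert (Dq := Fm_D Lam phi psi H s (c, d) Hq).
    assert (Dp := Fm_D Lam phi psi H s (x, y) Hp).
    assert (j = k).
    { apply (g_mono Lam) in H1. apply (g_mono Lam) in H2. rewrite !g_Tpow in H1, H2.
      apply (inD_g Lam _ HL) in Hp. apply (inD_g Lam _ HL) in Hq.
      apply (inD_g Lam _ HL) in Dq. apply (inD_g Lam _ HL) in Dp.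
      assert (k <= j)%Z by (apply (Zle_of Lam); lra).
      assert (j <= k)%Z by (apply (Zle_of Lam); lra). lia. }
    subst j. rewrite preceq_Tpow in H1, H2.
    apply inbdM_Tpow in Hwb.
    exact (local_fwd Lam phi psi HL H x y c d s eps Hp Hpb Hq Hwb (conj Hs Hse) H1 H2).
  - intros Hn.
    destruct (local_bwd Lam phi psi HL H x y eps Hp Hpb He Hn)
      as [s [c [d [Hs [Hq [Hqb [H1 H2]]]]]]].
    exists (Tpow Lam k (c, d)). split; [apply inM_Tpow; destruct Hq as [h|[h|h]];
      unfold inM, inS, inL, inA in *; simpl in *; lra|].
    split; [apply inbdM_Tpow; auto|].
    unfold d_int. eapply Rbar_le_lt_trans; [apply (glb_le _ s)|simpl; lra].
    split; [lra|].
    rewrite (calT_val Lam phi psi s k c d HL Hq), (calT_val Lam phi psi s k x y HL Hp).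
    rewrite !preceq_Tpow. auto.
Qed.
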